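(* Let $\mathfrak n=W\oplus\mathfrak z$ be a finite-dimensional 2-step nilpotent Lie algebra over a field $k$ of characteristic zero with center $\mathfrak z$ and linear complement $W$, and let $\delta$ be a Lie bialgebra cobracket on $\mathfrak n$. Then: (1) $\delta_1:W\to\Lambda^2W$ is a Lie coalgebra structure on $W$ (i.e. satisfies co-Jacobi); (2) if moreover $\delta(\mathfrak z)\subseteq\Lambda^2\mathfrak z$, then $T_iS_jT_k+T_kS_jT_i=0$ as maps $W\to W^*$, for all $1\le i,k\le\dim\mathfrak z$ and all $1\le j\le\dim W$.
   Context: A Lie bialgebra is a Lie algebra $\mathfrak g$ with a linear map $\delta:\mathfrak g\to\Lambda^2\mathfrak g$ satisfying co-Jacobi (in Sweedler notation $\delta(x)=x_1\wedge x_2$: $\delta(x_1)\wedge x_2-x_1\wedge\delta(x_2)=0$ in $\Lambda^3\mathfrak g$) and the 1-cocycle condition $\delta[x,y]=[\delta x,y]+[x,\delta y]$ (adjoint action on $\Lambda^2$). Using $\Lambda^2\mathfrak n=\Lambda^2W\oplus W\wedge\mathfrak z\oplus\Lambda^2\mathfrak z$, $\delta_1(v)$ for $v\in W$ denotes the $\Lambda^2W$-component of $\delta(v)$. Fix bases $\{z_i\}$ of $\mathfrak z$ and $\{\lambda_j\}$ of $W^*$. Define $T_i:W\to W^*$ by $[v,w]=\sum_iT_i(v)(w)z_i$ for $v,w\in W$. Let $[\,,\,]^*:W^*\times W^*\to W^*$ be the transpose of $\delta_1$: if $\delta_1(v)=v_1\wedge v_2$ then $[\lambda,\mu]^*(v)=\lambda(v_1)\mu(v_2)$.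 Define $S_j:W^*\to W\cong W^{**}$ by $[\lambda,\mu]^*=\sum_jS_j(\mu)(\lambda)\lambda_j$. *)

(* Defs.v *)
(* Lie algebras and Lie bialgebras are given in coordinates
   with respect to a basis indexed by a finite type I.  A vector is a function
   I -> F, a 2-tensor (element of n (x) n) is I -> I -> F, a 3-tensor is
   I -> I -> I -> F.  Lambda^k is realised inside the k-th tensor power with
   the convention  a /\ b = a (x) b - b (x) a  (full unnormalised alternation). *)
From HB Require Import structures.
From mathcomp Require Import all_boot all_order all_algebra.
Set Implicit Arguments. Unset Strict Implicit. Unset Printing Implicit Defensive.
Import Order.TTheory GRing.Theory Num.Theory.
Local Open Scope ring_scope.

Section Defs.
Variables (F : fieldType) (I : finType).

Definition ev (r : I) : I -> F := fun s => if s == r then 1 else 0.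

Definition lbr (C : I -> I -> I -> F) (x y : I -> F) : I -> F :=
  fun k => \sum_(a : I) \sum_(b : I) x a * y b * C a b k.

Definition is_lie_algebra (C : I -> I -> I -> F) : Prop :=
  (forall x k, lbr C x x k = 0) /\
  (forall x y z k, lbr C x (lbr C y z) k + lbr C y (lbr C z x) k
                   + lbr C z (lbr C x y) k = 0).

Definition cobr (D : I -> I -> I -> F) (x : I -> F) : I -> I -> F :=
  fun p q => \sum_(a : I) x a * D a p q.

(* A /\ v  and  v /\ A  for A in Lambda^2, v a vector, as 3-tensors *)
Definition wedge21 (A : I -> I -> F) (v : I -> F) : I -> I -> I -> F :=
  fun p q r => A p q * v r + A q r * v p + A r p * v q.
Definition wedge12 (v : I -> F) (A : I -> I -> F) : I -> I -> I -> F :=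
  fun p q r => v p * A q r + v q * A r p + v r * A p q.

Definition skew_valued (D : I -> I -> I -> F) : Prop :=
  forall a p q, D a p q = - D a q p.

(* co-Jacobi: delta(x_1) /\ x_2 - x_1 /\ delta(x_2) = 0 in Lambda^3, using the
   Sweedler decomposition delta(x) = sum_{b,c} (delta(x)_{bc}/2) e_b /\ e_c *)
Definition co_jacobi (D : I -> I -> I -> F) : Prop :=
  forall x p q r,
    \sum_(b : I) \sum_(c : I)
      (cobr D x b c / 2%:R) *
      (wedge21 (cobr D (ev b)) (ev c) p q r - wedge12 (ev b) (cobr D (ev c)) p q r)
    = 0.

Definition lie_coalgebra (D : I -> I -> I -> F) : Prop :=
  skew_valued D /\ co_jacobi D.

Definition adT (C : I -> I -> I -> F) (x : I -> F) (A : I -> I -> F) : I -> I -> F :=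
  fun p q => \sum_(r : I) (lbr C x (ev r) p * A r q + A p r * lbr C x (ev r) q).

Definition cocycle (C D : I -> I -> I -> F) : Prop :=
  forall x y p q,
    cobr D (lbr C x y) p q = adT C x (cobr D y) p q - adT C y (cobr D x) p q.

Definition lie_bialgebra (C D : I -> I -> I -> F) : Prop :=
  is_lie_algebra C /\ lie_coalgebra D /\ cocycle C D.

End Defs.

Section TwoStep.
Variables (F : fieldType) (m p : nat).
(* n = W (+) z with basis e_1..e_m of W (inl) and z_1..z_p of z (inr) *)
Notation idx := ('I_m + 'I_p)%type.

Definition two_step (C : idx -> idx -> idx -> F) : Prop :=
  (forall x y z k, lbr C x (lbr C y z) k = 0) /\
  (exists x y k, lbr C x y k != 0).

Definition center_is_z (C : idx -> idx -> idx -> F) : Prop :=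
  forall x : idx -> F, (forall y k, lbr C x y k = 0) <-> (forall a, x (inl a) = 0).

Definition delta_z_in_L2z (D : idx -> idx -> idx -> F) : Prop :=
  forall (i : 'I_p) (b : 'I_m) (q : idx), D (inr i) (inl b) q = 0 /\ D (inr i) q (inl b) = 0.

Definition delta1 (D : idx -> idx -> idx -> F) : 'I_m -> 'I_m -> 'I_m -> F :=
  fun a b c => D (inl a) (inl b) (inl c).

(* W and W^* in coordinates w.r.t. e_j and the dual basis lambda_j.
   T_i : W -> W^*,  [v,w] = sum_i T_i(v)(w) z_i *)
Definition Top (C : idx -> idx -> idx -> F) (i : 'I_p) (v : 'I_m -> F) : 'I_m -> F :=
  fun b => \sum_(a : 'I_m) v a * C (inl a) (inl b) (inr i).

(* S_j : W^* -> W,  [lambda,mu]^* = sum_j S_j(mu)(lambda) lambda_j, where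
   [lambda,mu]^*(v) is the pairing of lambda (x) mu with delta_1(v) *)
Definition Sop (D : idx -> idx -> idx -> F) (j : 'I_m) (mu : 'I_m -> F) : 'I_m -> F :=
  fun b => \sum_(c : 'I_m) mu c * D (inl j) (inl b) (inl c).

End TwoStep.

(* Main.v *)
Require Import Defs.
From HB Require Import structures.
From mathcomp Require Import all_boot all_order all_algebra.
From mathcomp Require Import ring.
Import GRing.Theory.
Local Open Scope ring_scope.


Lemma sum_ev (F:fieldType)(I:finType)(s:I)(f:I->F): \sum_a ev F s a * f a = f s.
Proof. rewrite (bigD1 s) //= /ev eqxx mul1r big1 ?addr0 // => a /negbTE ->; by rewrite mul0r. Qed.
Lemma sum_evr (F:fieldType)(I:finType)(s:I)(f:I->F): \sum_a f a * ev F s a = f s.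
Proof. rewrite -[RHS](@sum_ev _ _ s); apply: eq_bigr => a _; by rewrite mulrC. Qed.

Lemma lbr_ev (F:fieldType)(I:finType) C (s t : I) k : lbr C (ev F s) (ev F t) k = C s t k :> F.
Proof.
rewrite /lbr. under eq_bigr do under eq_bigr do rewrite -mulrA.
under eq_bigr do rewrite -mulr_sumr. by rewrite sum_ev sum_ev.
Qed.
Lemma lbr_evl (F:fieldType)(I:finType) C (s : I) y k : lbr C (ev F s) y k = \sum_b y b * C s b k :> F.
Proof.
rewrite /lbr. under eq_bigr do under eq_bigr do rewrite -mulrA.
under eq_bigr do rewrite -mulr_sumr. by rewrite sum_ev.
Qed.
Lemma lbr_swap (F:fieldType)(I:finType) C x y (k:I) :
  lbr C x y k = \sum_b y b * (\sum_a x a * C a b k) :> F.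
Proof.
rewrite /lbr exchange_big; apply: eq_bigr => b _; rewrite mulr_sumr; apply: eq_bigr => a _.
by rewrite mulrCA mulrA.
Qed.
Lemma cobr_ev (F:fieldType)(I:finType) D (s p q : I) : cobr D (ev F s) p q = D s p q :> F.
Proof. by rewrite /cobr sum_ev. Qed.

Lemma C_skew (F:fieldType)(I:finType) (C : I -> I -> I -> F) :
  is_lie_algebra C -> forall a b k, C a b k = - C b a k.
Proof.
move=> [H _] a b k.
have := H (fun s => ev F a s + ev F b s) k.
rewrite /lbr.
under eq_bigr do under eq_bigr do rewrite mulrDl !mulrDr !mulrDl.
rewrite ?big_split /=.
under eq_bigr do rewrite !big_split /=.
rewrite ?big_split /=.
have E : forall s t, \sum_i \sum_j ev F s i * ev F t j * C i j k = C s t k.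
  by move=> s t; rewrite -/(lbr C (ev F s) (ev F t) k) lbr_ev.
rewrite !E.
have := H (ev F a) k; have := H (ev F b) k; rewrite !lbr_ev => -> ->; rewrite add0r addr0 => /eqP; by rewrite addr_eq0 => /eqP.
Qed.


Lemma lbr_skew (F:fieldType)(I:finType) (C : I -> I -> I -> F) x y k :
  is_lie_algebra C -> lbr C x y k = - lbr C y x k.
Proof.
move=> HC; rewrite lbr_swap /lbr -sumrN; apply: eq_bigr => b _.
rewrite mulr_sumr -sumrN; apply: eq_bigr => a _.
by rewrite (@C_skew _ _ _ HC a b) mulrN mulrN mulrA.
Qed.


Lemma central_zero (F : fieldType) (m p : nat) (C : ('I_m + 'I_p)%type -> ('I_m + 'I_p)%type -> ('I_m + 'I_p)%type -> F) (w : ('I_m + 'I_p)%type -> F) :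
  center_is_z C -> (forall t k, \sum_s w s * C s t k = 0) -> forall a, w (inl a) = 0.
Proof.
move=> Hz H; apply/(proj1 (Hz w)) => y k; rewrite lbr_swap big1 // => b _; by rewrite H mulr0.
Qed.

Lemma C_inr (F : fieldType) (m p : nat) (C : ('I_m + 'I_p)%type -> ('I_m + 'I_p)%type -> ('I_m + 'I_p)%type -> F) i t k :
  is_lie_algebra C -> center_is_z C -> C (inr i) t k = 0 /\ C t (inr i) k = 0.
Proof.
move=> HC Hz.
have H0 : C (inr i) t k = 0.
  rewrite -(@lbr_ev _ _ C (inr i) t k); apply: (proj2 (Hz (ev F (inr i)))) => a.
  by rewrite /ev.
by split=> //; rewrite (@C_skew _ _ _ HC _ _ _) H0 oppr0.
Qed.

Lemma C_outl (F : fieldType) (m p : nat) (C : ('I_m + 'I_p)%type -> ('I_m + 'I_p)%type -> ('I_m + 'I_p)%type -> F) s t c :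
  is_lie_algebra C -> two_step C -> center_is_z C -> C s t (inl c) = 0.
Proof.
move=> HC [H2 _] Hz; rewrite -(@lbr_ev _ _ C s t).
apply: (proj1 (Hz (lbr C (ev F s) (ev F t)))) => y k.
by rewrite lbr_skew // H2 oppr0.
Qed.
Arguments C_inr {F m p C} i t k _ _.
Arguments C_outl {F m p C} s t c _ _ _.
Arguments central_zero {F m p C} w _ _ a.



Lemma D_zWW (F : fieldType) (m p : nat) (C D : ('I_m + 'I_p)%type -> ('I_m + 'I_p)%type -> ('I_m + 'I_p)%type -> F) i r b :
  is_lie_algebra C -> two_step C -> center_is_z C -> cocycle C D ->
  D (inr i) (inl r) (inl b) = 0.
Proof.
move=> HC H2 Hz Hco.
have Hs : forall a l, \sum_s C (inl a) s (inr l) * D (inr i) s (inl b) = 0.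
  move=> a l; have := Hco (ev F (inl a)) (ev F (inr i)) (inr l) (inl b).
  rewrite {1}/cobr big1; last by move=> s _; rewrite lbr_ev (C_inr _ _ _ HC Hz).2 mul0r.
  rewrite /adT [X in _ - X]big1 => [|s _]; last first.
    by rewrite !lbr_ev !(C_inr _ _ _ HC Hz).1 !mul0r mulr0 addr0.
  rewrite subr0 => /esym E; rewrite -[RHS]E; apply: eq_big => // s _.
  by rewrite !lbr_ev !cobr_ev (C_outl _ _ _ HC H2 Hz) mulr0 addr0.
apply: (central_zero (fun s => D (inr i) s (inl b)) Hz) => t k.
case: t => [a|l]; last first.
  by rewrite big1 // => s _; rewrite (C_inr _ _ _ HC Hz).2 mulr0.
case: k => [c|l].
  by rewrite big1 // => s _; rewrite (C_outl _ _ _ HC H2 Hz) mulr0.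
rewrite -[RHS]oppr0 -[in RHS](Hs a l) -sumrN; apply: eq_bigr => s _.
by rewrite (@C_skew _ _ _ HC s) mulrN mulrC.
Qed.

Lemma star_rel (F : fieldType) (m p : nat) (C D : ('I_m + 'I_p)%type -> ('I_m + 'I_p)%type -> ('I_m + 'I_p)%type -> F) (u w q : 'I_m) i :
  is_lie_algebra C -> two_step C -> center_is_z C -> cocycle C D -> delta_z_in_L2z D ->
  \sum_r D (inl w) (inl q) (inl r) * C (inl u) (inl r) (inr i)
  = \sum_r D (inl u) (inl q) (inl r) * C (inl w) (inl r) (inr i).
Proof.
move=> HC H2 Hz Hco Hd.
have := Hco (ev F (inl u)) (ev F (inl w)) (inl q) (inr i).
rewrite {1}/cobr big1; last first.
  move=> s _; rewrite lbr_ev; case: s => [c|l].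
    by rewrite (C_outl _ _ _ HC H2 Hz) mul0r.
  by rewrite (Hd l q (inr i)).1 mulr0.
rewrite /adT => /eqP; rewrite eq_sym subr_eq0 => /eqP E.
have G : forall x y, \sum_r (lbr C (ev F (inl x)) (ev F r) (inl q) * cobr D (ev F (inl y)) r (inr i) +
      cobr D (ev F (inl y)) (inl q) r * lbr C (ev F (inl x)) (ev F r) (inr i))
   = \sum_r D (inl y) (inl q) (inl r) * C (inl x) (inl r) (inr i).
  move=> x y; rewrite big_sumType /= [X in _ + X]big1 ?addr0 => [|l _]; last first.
    by rewrite !lbr_ev !cobr_ev (C_outl _ _ _ HC H2 Hz) (C_inr _ _ _ HC Hz).2 mul0r mulr0 addr0.
  apply: eq_bigr => r _.
  by rewrite !lbr_ev !cobr_ev (C_outl _ _ _ HC H2 Hz) mul0r add0r.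
by rewrite -G E G.
Qed.


Lemma ev_ll (F : fieldType) (m p : nat) (c r : 'I_m) :
  ev F (inl c : ('I_m + 'I_p)%type) (inl r) = ev F c r.
Proof. by []. Qed.
Lemma ev_rl (F : fieldType) (m p : nat) (c : 'I_p) (r : 'I_m) :
  ev F (inr c : ('I_m + 'I_p)%type) (inl r) = 0.
Proof. by []. Qed.
Lemma ev_lr (F : fieldType) (m p : nat) (c : 'I_m) (r : 'I_p) :
  ev F (inl c : ('I_m + 'I_p)%type) (inr r) = 0.
Proof. by []. Qed.

Lemma part1 (F : fieldType) (m p : nat) (C D : ('I_m + 'I_p)%type -> ('I_m + 'I_p)%type -> ('I_m + 'I_p)%type -> F) :
  is_lie_algebra C -> two_step C -> center_is_z C -> lie_bialgebra C D ->
  lie_coalgebra (delta1 D).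
Proof.
move=> HC H2 Hz [_ [[Hsk Hcj] Hco]].
split; first by move=> a b c; exact: Hsk.
move=> x p0 q r.
have := Hcj (fun s => match s with inl a => x a | inr _ => 0 end) (inl p0) (inl q) (inl r).
have Dz : forall l b c, D (inr l) (inl b) (inl c) = 0.
  by move=> l b c; exact: (@D_zWW F m p C D l b c HC H2 Hz Hco).
rewrite big_sumType /= [X in _ + X]big1 ?addr0 => [|l _]; last first.
  rewrite big1 // => c _; rewrite /wedge21 /wedge12 !cobr_ev !Dz !ev_rl.
  by rewrite ?mul0r ?mulr0 ?addr0 subrr mulr0.
move=> E; rewrite -[RHS]E; apply: eq_bigr => b _.
rewrite big_sumType /= [X in _ + X]big1 ?addr0 => [|l _]; last first.
  rewrite /wedge21 /wedge12 !cobr_ev !Dz !ev_rl.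
  by rewrite ?mulr0 ?mul0r ?addr0 ?subrr ?mulr0.
apply: eq_bigr => c _.
rewrite /wedge21 /wedge12 !cobr_ev !ev_ll /delta1.
congr (_ / _ * _).
rewrite /cobr big_sumType /= [X in _ + X]big1 ?addr0 //.
by move=> l _; rewrite mul0r.
Qed.


Definition Hs (F : fieldType) (m p : nat) (D : ('I_m + 'I_p)%type -> ('I_m + 'I_p)%type -> ('I_m + 'I_p)%type -> F)
  (P Q : 'I_m -> 'I_m -> F) (x y w : 'I_m) : F :=
  \sum_a \sum_c P x a * Q y c * D (inl w) (inl a) (inl c).

Lemma HsA (F : fieldType) (m p : nat) (D : ('I_m + 'I_p)%type -> ('I_m + 'I_p)%type -> ('I_m + 'I_p)%type -> F) P Q x y w :
  skew_valued D -> @Hs F m p D P Q x y w = - @Hs F m p D Q P y x w.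
Proof.
move=> Hsk; rewrite /Hs exchange_big -sumrN; apply: eq_bigr => c _.
rewrite -sumrN; apply: eq_bigr => a _.
by rewrite (Hsk (inl w) (inl a)) mulrN [P x a * _]mulrC.
Qed.

Lemma HsB (F : fieldType) (m p : nat) (C : ('I_m + 'I_p)%type -> ('I_m + 'I_p)%type -> ('I_m + 'I_p)%type -> F) (D : ('I_m + 'I_p)%type -> ('I_m + 'I_p)%type -> ('I_m + 'I_p)%type -> F) P (k : 'I_p) x y w :
  is_lie_algebra C -> two_step C -> center_is_z C -> cocycle C D -> delta_z_in_L2z D ->
  @Hs F m p D P (fun a b => C (inl a) (inl b) (inr k)) x y w
  = @Hs F m p D P (fun a b => C (inl a) (inl b) (inr k)) x w y.
Proof.
move=> HC H2 Hz Hco Hd; rewrite /Hs; apply: eq_bigr => a _.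
have E : forall y w, \sum_c P x a * C (inl y) (inl c) (inr k) * D (inl w) (inl a) (inl c)
   = P x a * \sum_c D (inl w) (inl a) (inl c) * C (inl y) (inl c) (inr k).
  move=> y' w'; rewrite mulr_sumr; apply: eq_bigr => c _; by rewrite mulrAC -mulrA.
by rewrite !E (@star_rel F m p C D y w a k HC H2 Hz Hco Hd).
Qed.


Lemma expand (F : fieldType) (m p : nat) (C D : ('I_m + 'I_p)%type -> ('I_m + 'I_p)%type -> ('I_m + 'I_p)%type -> F) i k j v d :
  is_lie_algebra C ->
  Top C i (Sop D j (Top C k v)) d =
  - \sum_e v e * @Hs F m p D (fun a b => C (inl a) (inl b) (inr i)) (fun a b => C (inl a) (inl b) (inr k)) d e j.
Proof.
move=> HC; rewrite /Top /Sop /Hs.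
under eq_bigr => a _ do rewrite big_distrl /=.
under eq_bigr => a _ do under eq_bigr => c _ do rewrite big_distrl big_distrl /=.
under eq_bigr do rewrite exchange_big.
rewrite exchange_big -sumrN; apply: eq_bigr => e _; rewrite mulr_sumr -sumrN.
apply: eq_bigr => a _; rewrite mulr_sumr -sumrN; apply: eq_bigr => c _.
rewrite (@C_skew _ _ _ HC (inl a)); ring.
Qed.

Theorem mainTheorem4 (F : fieldType) (hF : [pchar F] =i pred0) (m p : nat)
    (C D : ('I_m + 'I_p)%type -> ('I_m + 'I_p)%type -> ('I_m + 'I_p)%type -> F) :
  is_lie_algebra C -> two_step C -> center_is_z C -> lie_bialgebra C D ->
  lie_coalgebra (delta1 D) /\
  (delta_z_in_L2z D ->
     forall (i k : 'I_p) (j : 'I_m) (v : 'I_m -> F) (d : 'I_m),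
       Top C i (Sop D j (Top C k v)) d + Top C k (Sop D j (Top C i v)) d = 0).
Proof.
move=> HC H2 Hz HB; split; first by apply: (@part1 F m p C D HC H2 Hz HB).
move: HB => [_ [[Hsk _] Hco]] Hd i k j v d.
rewrite !expand // -opprD -big_split /= big1 ?oppr0 // => e _.
rewrite -mulrDr.
set ci := (fun a b => C (inl a) (inl b) (inr i)).
set ck := (fun a b => C (inl a) (inl b) (inr k)).
have B := fun P (l : 'I_p) x y w => @HsB F m p C D P l x y w HC H2 Hz Hco Hd.
have A := fun P Q x y w => @HsA F m p D P Q x y w Hsk.
suff -> : Hs F m p D ci ck d e j = - Hs F m p D ck ci d e j by rewrite addNr mulr0.
rewrite [LHS](B _ k) [LHS]A [Hs _ _ _ _ _ _ j d e](B _ i) [Hs _ _ _ _ _ _ j e d]A opprK.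
by rewrite [LHS](B _ k) [LHS]A.
Qed.
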